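(* For every $\varepsilon>0$ and every integer $s\ge1$ there exists a $d$-regular $K_{s+2}$-saturated graph on $n$ vertices with $d/n<\varepsilon$. Moreover, for every integer $s\ge 1$ there exists an infinite sequence of graphs $F_m$, where $F_m$ is $d_m$-regular, $K_{s+2}$-saturated and has $n_m$ vertices, such that $\frac{d_m}{n_m}=O_s\!\left(\frac{(\log\log n_m)^2}{\log n_m}\right)$.
   Context: All graphs are finite and simple. For a graph $F$, a graph $G$ is $F$-saturated if $G$ contains no copy of $F$, but adding any edge between two non-adjacent vertices of $G$ creates a copy of $F$. $K_r$ denotes the complete graph on $r$ vertices. $O_s$ means the implied constant may depend on $s$. *)

(* Defs.v *)
From mathcomp Require Import all_boot.
From Stdlib Require Import Reals.
Set Implicit Arguments. Unset Strict Implicit. Unset Printing Implicit Defensive.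

Definition simple_graph (V : finType) (e : rel V) : Prop :=
  (forall x y, e x y = e y x) /\ (forall x, ~~ e x x).

Definition regular (V : finType) (e : rel V) (d : nat) : Prop :=
  forall v : V, #|[set w | e v w]| = d.

Definition has_clique (V : finType) (e : rel V) (r : nat) : Prop :=
  exists S : {set V}, #|S| = r /\
    (forall x y, x \in S -> y \in S -> x != y -> e x y).

Definition add_edge (V : finType) (e : rel V) (x y : V) : rel V :=
  fun u v => e u v || ((u == x) && (v == y)) || ((u == y) && (v == x)).

Definition Kr_saturated (V : finType) (e : rel V) (r : nat) : Prop :=
  ~ has_clique e r /\
  (forall x y : V, x != y -> ~~ e x y -> has_clique (add_edge e x y) r).

(* Main.v *)
Require Import Defs.
From mathcomp Require Import all_boot.
From Stdlib Require Import Reals.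
From Stdlib Require Import Lra.
From mathcomp Require Import zify.
Set Implicit Arguments. Unset Strict Implicit. Unset Printing Implicit Defensive.

Definition kk (s e : nat) := 'C(s.+2, 2) * e + 1.
Definition V (s e : nat) := {ffun 'I_(kk s e) -> 'I_s.+1}.
Definition agree s e (x y : V s e) := #|[set i | x i == y i]|.
Definition adj s e : rel (V s e) := fun x y => agree x y <= e.

Lemma kk_gt s e : e < kk s e.
Proof.
rewrite /kk. have : 0 < 'C(s.+2, 2) by rewrite bin_gt0.
move=> h. nia.
Qed.

Lemma adj_simple s e : simple_graph (@adj s e).
Proof.
split.
- move=> x y; rewrite /adj /agree.
  suff -> : [set i | x i == y i] = [set i | y i == x i] by [].
  by apply/setP=> i; rewrite !inE eq_sym.
- move=> x; rewrite /adj /agree -ltnNge.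
  have -> : [set i | x i == x i] = setT by apply/setP=> i; rewrite !inE eqxx.
  by rewrite cardsT card_ord kk_gt.
Qed.

Definition swap (T : eqType) (a b z : T) := if z == a then b else if z == b then a else z.
Lemma swapK (T : eqType) (a b : T) : involutive (swap a b).
Proof.
move=> z; rewrite /swap.
case: (eqVneq z a) => [->|h1]; first by rewrite eqxx; case: eqVneq.
case: (eqVneq z b) => [->|h2]; first by rewrite eqxx.
by rewrite (negbTE h1) (negbTE h2).
Qed.
Lemma swap_inj (T : eqType) (a b : T) : injective (swap a b).
Proof. exact: inv_inj (swapK a b). Qed.
Lemma swapL (T : eqType) (a b : T) : swap a b a = b.
Proof. by rewrite /swap eqxx. Qed.

Lemma deg_eq s e (u v : V s e) :
  #|[set w | adj v w]| = #|[set w | adj u w]|.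
Proof.
pose phi := fun w : V s e => [ffun i => swap (v i) (u i) (w i)].
have phi_inj : injective phi.
  move=> w1 w2 /ffunP E; apply/ffunP=> i; move: (E i); rewrite !ffunE.
  exact: swap_inj.
rewrite -(card_imset _ phi_inj); apply: eq_card => w.
apply/imsetP/idP.
- case=> w' ; rewrite !inE => h ->.
  move: h; rewrite /adj /agree.
  suff -> : [set i | u i == phi w' i] = [set i | v i == w' i] by [].
  apply/setP=> i; rewrite !inE ffunE -{1}(swapL (v i) (u i)).
  by rewrite (inj_eq (@swap_inj _ _ _)).
- rewrite inE => h.
  have [w' Hw'] : exists w', phi w' = w.
    exists [ffun i => swap (v i) (u i) (w i)]; apply/ffunP=> i; rewrite !ffunE.
    by rewrite swapK.
  exists w' => //; rewrite inE; move: h; rewrite -Hw' /adj /agree.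
  suff -> : [set i | u i == phi w' i] = [set i | v i == w' i] by [].
  apply/setP=> i; rewrite !inE ffunE -{1}(swapL (v i) (u i)).
  by rewrite (inj_eq (@swap_inj _ _ _)).
Qed.

Lemma fiber_bound (X Y : finType) (h : X -> Y) (Q : {set Y}) (e : nat) :
  (forall x, h x \in Q) -> (forall y, y \in Q -> #|[set x | h x == y]| <= e) ->
  #|X| <= #|Q| * e.
Proof.
move=> hQ hb.
have -> : #|X| = \sum_(x : X) 1 by rewrite sum1_card.
rewrite (partition_big h (mem Q)) //=.
rewrite -sum_nat_const; apply: leq_sum => y yQ.
move: (hb y yQ); apply: leq_trans.
rewrite -sum1_card; apply: eq_leq; by apply: eq_bigl => x; rewrite !inE.
Qed.

Lemma adj_noclique s e : ~ has_clique (@adj s e) (s + 2).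
Proof.
case=> S [cS hS].
pose Q := [set A : {set V s e} | A \subset S & #|A| == 2].
pose ag (A : {set V s e}) (i : 'I_(kk s e)) := [forall u in A, forall w in A, u i == w i].
have pig : forall i, exists A, (A \in Q) && ag A i.
  move=> i.
  case: (boolP [exists u in S, exists w in S, (u != w) && (u i == w i)]).
    case/existsP=> u /andP[uS] /existsP[w] /andP[wS] /andP[neq E].
    exists [set u; w]; apply/andP; split.
      rewrite inE; apply/andP; split; last by rewrite cards2 neq.
      by apply/subsetP=> z; rewrite !inE => /orP[]/eqP->.
    apply/forallP=> a; apply/implyP; rewrite !inE => /orP[]/eqP-> ;
    apply/forallP=> b; apply/implyP; rewrite !inE => /orP[]/eqP-> //;
    by rewrite ?(eqP E) ?eqxx.
  move=> H.
  have inj : {in S &, injective (fun w : V s e => w i)}.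
    move=> u w uS wS E; apply/eqP; apply/negPn/negP => neq.
    move/negP: H; apply; apply/existsP; exists u; rewrite uS /=.
    by apply/existsP; exists w; rewrite wS neq /= E eqxx.
  have := max_card [set (fun w : V s e => w i) x | x in S].
  by rewrite (card_in_imset inj) cS card_ord addn2 ltnn.
have [h hh] := fin_all_exists pig.
have := fiber_bound (h := h) (Q := Q) (e := e).
rewrite card_ord.
have -> : #|Q| = 'C(s.+2, 2) by rewrite cards_draws cS addn2.
have HQ : forall i, h i \in Q by move=> i; case/andP: (hh i).
move/(_ HQ).
have : 'C(s.+2, 2) * e < kk s e by rewrite /kk addn1.
move=> lt le; suff : kk s e <= 'C(s.+2, 2) * e by rewrite leqNgt lt.
apply: le => A AQ.
move: (AQ); rewrite inE => /andP[AS /cards2P[u [w [neq EA]]]].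
have uS : u \in S by apply: (subsetP AS); rewrite EA !inE eqxx.
have wS : w \in S by apply: (subsetP AS); rewrite EA !inE eqxx orbT.
have := hS u w uS wS neq; rewrite /adj /agree; apply: leq_trans.
apply: subset_leq_card; apply/subsetP=> i; rewrite !inE => /eqP hi.
case/andP: (hh i) => _; rewrite hi EA => /forallP/(_ u)/implyP.
rewrite !inE eqxx => /(_ isT)/forallP/(_ w)/implyP; rewrite !inE eqxx orbT.
by move/(_ isT).
Qed.

Lemma set2_eqE (T : finType) (r r' a b : T) : r != r' -> a != b ->
  ([set r; r'] == [set a; b]) = ((r == a) && (r' == b)) || ((r == b) && (r' == a)).
Proof.
move=> nr nab; apply/eqP/idP.
- move=> E.
  have hr : r \in [set a; b] by rewrite -E !inE eqxx.
  have hr' : r' \in [set a; b] by rewrite -E !inE eqxx orbT.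
  move: hr hr'; rewrite !inE => /orP[]/eqP hr /orP[]/eqP hr'; subst.
  + by rewrite eqxx in nr.
  + by rewrite !eqxx.
  + by rewrite !eqxx orbT.
  + by rewrite eqxx in nr.
- case/orP=> /andP[/eqP-> /eqP->] //.
  by rewrite setUC.
Qed.

Definition cmap s (a b : 'I_s.+2) (r : 'I_s.+2) : 'I_s.+1 :=
  inord (unbump b (if r == b then a else r)).

Lemma cmapE s (a b r r' : 'I_s.+2) : a != b -> r != r' ->
  (cmap a b r == cmap a b r') = ([set r; r'] == [set a; b]).
Proof.
move=> nab nr; rewrite set2_eqE //.
have bnd : forall x : 'I_s.+2, x != b -> unbump b x <= s.
  move=> x; rewrite /unbump; case: x => x /= hx nx.
  have /eqP : x != b :> nat by [].
  have := ltn_ord b; case: ltnP => /= h1 h2 h3; lia.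
have mb : forall x : 'I_s.+2, (if x == b then a else x) != b.
  by move=> x; case: (eqVneq x b) => // _; rewrite eq_sym.
rewrite /cmap -(inj_eq val_inj) /= !inordK ?ltnS ?bnd //.
have ub : forall x y : 'I_s.+2, x != b -> y != b -> (unbump b x == unbump b y) = (x == y).
  move=> [x hx] [y hy] /= nx ny; rewrite -(inj_eq val_inj) /=.
  have /eqP : x != b :> nat by []. have /eqP : y != b :> nat by [].
  have := ltn_ord b.
  rewrite /unbump; case: ltnP; case: ltnP => /= h1 h2 h3 h4 h5; apply/eqP/eqP; lia.
rewrite ub //.
case: (eqVneq r b) => [Erb|rb]; case: (eqVneq r' b) => [Er'b|r'b].
- by rewrite Erb Er'b eqxx in nr.
- by subst r; rewrite andbF /= eq_sym.
- by subst r'; rewrite andbT /= orbF.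
- by rewrite (negbTE nr) andbF.
Qed.

Definition r1 s : 'I_s.+2 := inord 1.
Lemma r01 s : (ord0 : 'I_s.+2) != r1 s.
Proof. by rewrite -(inj_eq val_inj) /= /r1 inordK. Qed.

Lemma coord_exists s (a b : 'I_s.+2) (u0 u1 : 'I_s.+1) : a != b ->
  (u0 == u1) = ([set ord0; r1 s] == [set a; b]) ->
  exists f : {ffun 'I_s.+2 -> 'I_s.+1}, f ord0 = u0 /\ f (r1 s) = u1 /\
    forall r r', r != r' -> (f r == f r') = ([set r; r'] == [set a; b]).
Proof.
move=> nab hu.
pose c := cmap a b.
pose tau := swap (c ord0) u0.
pose sig := swap (tau (c (r1 s))) u1.
exists [ffun r => sig (tau (c r))]; split; [|split].
- rewrite ffunE /sig /tau swapL.
  case: (eqVneq (c ord0) (c (r1 s))) => [E|NE].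
    have /eqP hu01 : u0 == u1 by rewrite hu -cmapE ?r01 //; apply/eqP; exact: E.
    by rewrite -hu01 -E !swapL.
  have nu : u0 != u1 by rewrite hu -cmapE ?r01.
  rewrite /swap.
  have : (swap (c ord0) u0 (c (r1 s))) != u0.
    by rewrite -{2}(swapL (c ord0) u0) (inj_eq (@swap_inj _ _ _)) eq_sym.
  by rewrite eq_sym => /negbTE ->; rewrite (negbTE nu).
- by rewrite ffunE /sig swapL.
- move=> r r' nr; rewrite !ffunE (inj_eq (@swap_inj _ _ _)) (inj_eq (@swap_inj _ _ _)).
  exact: cmapE.
Qed.

Lemma fiber_exists (X Y : finType) (P : pred X) (Q : {set Y}) (y0 : Y) e :
  #|P| <= #|Q| * e -> exists g : X -> Y,
    (forall x, P x -> g x \in Q) /\ (forall y, #|[set x | P x & g x == y]| <= e).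
Proof.
move=> hc.
case: (posnP e) => [e0|epos].
  have P0 : forall x, P x = false.
    move=> x; apply/negbTE/negP => Px.
    have : #|P| == 0 by rewrite -leqn0 (leq_trans hc) // e0 muln0.
    move/eqP/card0_eq => /(_ x).
    by rewrite unfold_in Px.
  exists (fun _ => y0); split=> [x|y]; first by rewrite P0.
  by rewrite e0 leqn0 cards_eq0; apply/eqP/setP=> x; rewrite !inE P0.
pose sP := enum P.
pose idx x := index x sP.
pose g x := nth y0 (enum Q) (idx x %/ e).
have idxlt : forall x, P x -> idx x < #|Q| * e.
  move=> x Px; apply: leq_trans hc; rewrite cardE index_mem mem_enum; exact: Px.
have gQ : forall x, P x -> idx x %/ e < size (enum Q).
  by move=> x Px; rewrite -cardE ltn_divLR // idxlt.
exists g; split.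
  by move=> x Px; rewrite -mem_enum mem_nth // gQ.
move=> y.
set F := [set x | P x & g x == y].
rewrite cardE -(size_map idx) -(size_iota (index y (enum Q) * e) e).
apply: uniq_leq_size.
  rewrite map_inj_in_uniq ?enum_uniq //.
  move=> x x'; rewrite !mem_enum !inE => /andP[Px _] /andP[Px' _] E.
  have h1 : x \in sP by rewrite mem_enum.
  have h2 : x' \in sP by rewrite mem_enum.
  by rewrite -(nth_index x h1) -(nth_index x h2) -/(idx x) -/(idx x') E.
move=> m /mapP[x]; rewrite mem_enum inE => /andP[Px /eqP gx] ->.
have : index y (enum Q) = idx x %/ e.
  by rewrite -gx /g index_uniq ?enum_uniq ?gQ.
move=> ->; rewrite mem_iota.
have := divn_eq (idx x) e; have := ltn_pmod (idx x) epos.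
move=> h1 h2; apply/andP; split; lia.
Qed.

Lemma adj_neq s e (u w : V s e) : adj u w -> u != w.
Proof. by move=> h; apply/eqP=> E; move: h; rewrite E; case: (adj_simple s e) => _ /(_ w)/negP. Qed.

Lemma adj_sat s e (x y : V s e) : x != y -> ~~ adj x y -> has_clique (add_edge (@adj s e) x y) (s + 2).
Proof.
move=> nxy nadj.
pose D := [set i | x i != y i].
pose r0 : 'I_s.+2 := ord0.
pose Q' := [set A : {set 'I_s.+2} | (#|A| == 2) && (A != [set r0; r1 s])].
have cQ' : #|Q'| = 'C(s.+2, 2) - 1.
  have : #|[set A : {set 'I_s.+2} | #|A| == 2]| = 'C(s.+2, 2) by rewrite card_draws card_ord.
  rewrite (cardsD1 [set r0; r1 s]) !inE cards2 r01 /= => <-.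
  rewrite addKn; apply: eq_card => A; rewrite !inE andbC.
  by [].
have cD : #|D| <= #|Q'| * e.
  have h1 := cardsC [set i | x i == y i].
  have -> : D = ~: [set i | x i == y i] by apply/setP=> i; rewrite !inE.
  move: nadj h1; rewrite /adj /agree card_ord cQ' -ltnNge /kk => h2 h3.
  have : 0 < 'C(s.+2, 2) by rewrite bin_gt0.
  nia.
have [g [gQ gb]] := fiber_exists (P := mem D) set0 cD.
pose p i := if x i == y i then [set r0; r1 s] else g i.
have hp : forall i, exists f : {ffun 'I_s.+2 -> 'I_s.+1}, f r0 = x i /\ f (r1 s) = y i /\
    forall r r', r != r' -> (f r == f r') = ([set r; r'] == p i).
  move=> i.
  have [a [b [nab Epi]]] : exists a b, a != b /\ p i = [set a; b].
    apply/cards2P; rewrite /p; case: (eqVneq (x i) (y i)) => hxy.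
      by rewrite cards2 r01.
    have : g i \in Q' by apply: gQ; change (i \in D); rewrite inE.
    by rewrite inE => /andP[].
  have := coord_exists (u0 := x i) (u1 := y i) nab.
  rewrite -Epi /p; case: (eqVneq (x i) (y i)) => hxy.
    by rewrite eqxx => /(_ erefl).
  have : g i \in Q' by apply: gQ; change (i \in D); rewrite inE.
  rewrite inE => /andP[_ hg]; rewrite eq_sym (negbTE hg) => /(_ erefl).
  by [].
have [F hF] := fin_all_exists hp.
pose v r : V s e := [ffun i => F i r].
have v0 : v r0 = x by apply/ffunP=> i; rewrite ffunE; case: (hF i).
have v1 : v (r1 s) = y by apply/ffunP=> i; rewrite ffunE; case: (hF i) => _ [].
have vadj : forall r r', r != r' -> [set r; r'] != [set r0; r1 s] -> adj (v r) (v r').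
  move=> r r' nr nA; rewrite /adj /agree; apply: leq_trans (gb [set r; r']).
  apply: subset_leq_card; apply/subsetP=> i; rewrite !inE !ffunE.
  case: (hF i) => _ [_ h]; rewrite h // /p.
  case: (eqVneq (x i) (y i)) => hxy /=.
    by move/eqP=> E; rewrite E eqxx in nA.
  by move=> /eqP->.
have vinj : injective v.
  move=> r r' E; apply/eqP; apply/negPn/negP=> nr.
  case: (eqVneq [set r; r'] [set r0; r1 s]) => hA.
    move/eqP: hA; rewrite set2_eqE ?r01 //.
    case/orP=> /andP[/eqP Er /eqP Er']; move: E; rewrite Er Er' v0 v1 => E.
      by rewrite E eqxx in nxy.
    by rewrite E eqxx in nxy.
  by move: (adj_neq (vadj r r' nr hA)); rewrite E eqxx.
exists (v @: setT); split.
  by rewrite card_imset // cardsT card_ord addn2.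
move=> u w /imsetP[r _ ->] /imsetP[r' _ ->] nuw.
have nr : r != r' by apply: contraNneq nuw => ->.
rewrite /add_edge.
case: (eqVneq [set r; r'] [set r0; r1 s]) => hA.
  move/eqP: hA; rewrite set2_eqE ?r01 //.
  by case/orP=> /andP[/eqP -> /eqP ->]; rewrite v0 v1 !eqxx ?orbT.
by rewrite vadj.
Qed.

Lemma card_fam (aT : finType) (rT : finType) (F : aT -> pred rT) :
  #|(finfun.family F : simpl_pred {ffun aT -> rT})| = \prod_(x : aT) #|F x|.
Proof.
by rewrite card_family foldrE big_map big_enum.
Qed.

Definition Z s e (w : V s e) := [set i | w i == ord0].

Lemma cardZA s e (A : {set 'I_(kk s e)}) :
  #|[set w : V s e | Z w == A]| = expn s (kk s e - #|A|).
Proof.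
pose F := fun i : 'I_(kk s e) => if i \in A then pred1 (ord0 : 'I_s.+1) else predC1 ord0.
rewrite (@eq_card _ _ (finfun.family F)); last first.
  move=> w; rewrite inE; apply/eqP/familyP.
  - move=> hZ i; rewrite /F -hZ inE.
    by case: (eqVneq (w i) ord0) => h /=; rewrite ?h ?inE ?h. 
  - move=> h; apply/setP=> i; rewrite inE; move: (h i); rewrite /F.
    by case: (i \in A); rewrite !inE /=; [move=> -> | move/negbTE].
rewrite card_fam.
rewrite (eq_bigr (fun i => if i \notin A then s else 1)); last first.
  by move=> i _; rewrite /F; case: (i \in A); rewrite /= ?card1 ?cardC1 ?card_ord.
rewrite -big_mkcond prod_nat_const.
congr (expn s _).
have -> : #|[pred i | i \notin A]| = #|~: A| by apply: eq_card => i; rewrite !inE.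
move: (cardsC A); rewrite card_ord => h; lia.
Qed.

Lemma cardN s e j : #|[set w : V s e | #|Z w| == j]| = 'C(kk s e, j) * expn s (kk s e - j).
Proof.
rewrite -sum1_card (partition_big (@Z s e) [pred A : {set 'I_(kk s e)} | #|A| == j]); last first.
  by move=> w; rewrite !inE.
rewrite (eq_bigr (fun _ => expn s (kk s e - j))); last first.
  move=> A /eqP hA; rewrite -hA -cardZA -[RHS]sum1_card; apply: eq_bigl => w.
  rewrite !inE; case: (eqVneq (Z w) A) => [->|]; first by rewrite hA eqxx.
  by rewrite andbF.
rewrite sum_nat_const; congr (_ * _).
have := card_draws 'I_(kk s e) j; rewrite card_ord => <-.
by apply: eq_card => A; rewrite !inE.
Qed.

Lemma cnt_range (X : finType) (f : X -> nat) a m :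
  #|[set x | a <= f x < a + m]| = \sum_(a <= j < a + m) #|[set x | f x == j]|.
Proof.
elim: m => [|m IH].
  rewrite addn0 big_geq //; apply/eqP; rewrite cards_eq0; apply/eqP/setP=> x; rewrite !inE.
  by case: leqP => //= h; rewrite ltnNge h.
rewrite addnS big_nat_recr ?leq_addr //= -IH.
have -> : [set x | a <= f x < (a + m).+1] =
   [set x | a <= f x < a + m] :|: [set x | f x == a + m].
  apply/setP=> x; rewrite !inE ltnS.
  case: (eqVneq (f x) (a + m)) => [->|h] /=; first by rewrite leq_addr leqnn orbT.
  by rewrite orbF (leq_eqVlt (f x)) (negbTE h).
rewrite cardsU.
have -> : [set x | a <= f x < a + m] :&: [set x | f x == a + m] = set0.
  apply/setP=> x; rewrite !inE.
  by case: (eqVneq (f x) (a + m)) => [->|h]; rewrite ?ltnn ?andbF.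
by rewrite cards0 subn0.
Qed.

Definition T k s j := 'C(k, j) * expn s (k - j).

Lemma Trec k s j : j < k -> T k s j.+1 * (j.+1 * s) = T k s j * (k - j).
Proof.
move=> jk; rewrite /T.
have e1 : k - j = (k - j.+1).+1 by lia.
have hb := mul_bin_left k j.
rewrite e1 in hb *; rewrite expnS.
move: hb; set X := expn s (k - j.+1); set C1 := 'C(k, j.+1); set C0 := 'C(k, j).
move=> hb.
have -> : C1 * X * (j.+1 * s) = (j.+1 * C1) * (s * X) by nia.
rewrite hb; nia.
Qed.

Lemma Tinc k s j c : 0 < s -> j < k -> c * (j.+1 * s) <= k - j -> c * T k s j <= T k s j.+1.
Proof.
move=> s0 jk h.
have p : 0 < j.+1 * s by rewrite muln_gt0.
rewrite -(leq_pmul2r p) Trec //.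
by rewrite [c * _]mulnC -mulnA leq_mul2l h orbT.
Qed.

Lemma sum_low k s e : (forall j, j < e -> 2 * T k s j <= T k s j.+1) ->
  \sum_(0 <= j < e.+1) T k s j <= 2 * T k s e.
Proof.
elim: e => [|e IH] h.
  by rewrite big_nat1 leq_pmull.
rewrite big_nat_recr //=.
have := IH (fun j hj => h j (ltnW hj)).
have := h e (ltnSn e).
lia.
Qed.

Lemma sum_high k s e m : (forall j, e <= j -> j < e + m -> T k s j <= T k s j.+1) ->
  m.+1 * T k s e <= \sum_(e <= j < e + m.+1) T k s j.
Proof.
move=> h.
have mono : forall i, i <= m -> T k s e <= T k s (e + i).
  elim=> [|i IH] hi; first by rewrite addn0.
  apply: leq_trans (IH (ltnW hi)) _; rewrite addnS; apply: h; lia.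
have -> : m.+1 * T k s e = \sum_(e <= j < e + m.+1) T k s e.
  by rewrite sum_nat_const_nat; congr (_ * _); lia.
rewrite big_nat_cond [X in _ <= X]big_nat_cond.
apply: leq_sum => j /andP[/andP[h1 h2] _].
have -> : j = e + (j - e) by lia.
apply: mono; lia.
Qed.

Lemma binB s : 'C(s.+2, 2) * 2 = s.+2 * s.+1.
Proof.
have := bin_ffact s.+2 2.
by rewrite !ffactnS ffactn0 /= muln1 (_ : 2`! = 2).
Qed.

Lemma lowc s e j : 0 < s -> j < e -> 2 * (j.+1 * s) <= kk s e - j.
Proof. move=> s0 je; have := binB s; rewrite /kk => h; nia. Qed.

Lemma highc s e j : 0 < s -> e <= j -> j < e + e./2 -> j.+1 * s <= kk s e - j.
Proof.
move=> s0 h1 h2; have := binB s; rewrite /kk => h.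
have h3 : 2 * j.+1 <= 3 * e by lia.
nia.
Qed.

Definition w0 s e : V s e := [ffun => ord0].
Definition deg s e := #|[set w | @adj s e (w0 s e) w]|.

Lemma density s e : 0 < s -> deg s e * e.+1 <= 4 * #|V s e|.
Proof.
move=> s0.
have ek : e < kk s e by exact: kk_gt.
have hd : deg s e = \sum_(0 <= j < 0 + e.+1) T (kk s e) s j.
  rewrite -(eq_bigr _ (fun j _ => cardN s e j)) -cnt_range.
  apply: eq_card => w; rewrite !inE /adj /agree add0n ltnS.
  suff -> : [set i | w0 s e i == w i] = Z w by [].
  by apply/setP=> i; rewrite !inE ffunE eq_sym.
have hn : \sum_(e <= j < e + (e./2).+1) T (kk s e) s j <= #|V s e|.
  rewrite -(eq_bigr _ (fun j _ => cardN s e j)) -cnt_range.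
  exact: max_card.
have h1 : deg s e <= 2 * T (kk s e) s e.
  rewrite hd add0n; apply: sum_low => j je.
  apply: Tinc => //; first lia.
  exact: lowc.
have h2 : (e./2).+1 * T (kk s e) s e <= #|V s e|.
  apply: leq_trans hn; apply: sum_high => j h3 h4.
  rewrite -[X in X <= _]mul1n; apply: Tinc => //; first by have := highc s0 h3 h4; nia.
  rewrite mul1n; exact: highc.
have h3 : e.+1 <= 2 * (e./2).+1.
  have := odd_double_half e; case: (odd e) => /=; lia.
nia.
Qed.

Definition tr (T : finType) (r : rel T) : rel 'I_#|T| :=
  fun i j => r (enum_val i) (enum_val j).

Lemma tr_simple (T : finType) (r : rel T) : simple_graph r -> simple_graph (tr r).
Proof. by case=> h1 h2; split=> [x y|x]; rewrite /tr. Qed.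

Lemma tr_regular (T : finType) (r : rel T) d :
  (forall v, #|[set w | r v w]| = d) -> regular (tr r) d.
Proof.
move=> h v; rewrite -(h (enum_val v)) -(card_imset _ enum_val_inj).
apply: eq_card => x; rewrite inE; apply/imsetP/idP.
- by case=> w; rewrite inE => hw ->.
- by move=> hx; exists (enum_rank x); rewrite ?inE /tr enum_rankK.
Qed.

Lemma clique_map (T1 T2 : finType) (r1 : rel T1) (r2 : rel T2) (f : T1 -> T2) p :
  injective f -> (forall a b, a != b -> r1 a b -> r2 (f a) (f b)) ->
  has_clique r1 p -> has_clique r2 p.
Proof.
move=> finj hf [S [cS hS]]; exists (f @: S); split; first by rewrite card_imset.
move=> x y /imsetP[a aS ->] /imsetP[b bS ->] nab.
have nab' : a != b by apply: contraNneq nab => ->.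
exact: hf nab' (hS a b aS bS nab').
Qed.

Lemma tr_sat (T : finType) (r : rel T) p : Kr_saturated r p -> Kr_saturated (tr r) p.
Proof.
case=> h1 h2; split.
  move=> hc; apply: h1; apply: (clique_map (f := @enum_val T (mem predT)) _ _ hc) => //.
  exact: enum_val_inj.
move=> i j nij nr.
have nij' : enum_val i != enum_val j by rewrite (inj_eq enum_val_inj).
have := h2 _ _ nij' nr; apply: clique_map; first exact: enum_rank_inj.
move=> a b _; rewrite /add_edge /tr !enum_rankK.
rewrite -(enum_valK i) -(enum_valK j) !(inj_eq enum_rank_inj).
by rewrite !enum_rankK.
Qed.

Lemma graph_props s e : simple_graph (tr (@adj s e)) /\ regular (tr (@adj s e)) (deg s e) /\
  Kr_saturated (tr (@adj s e)) (s + 2).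
Proof.
split; first exact/tr_simple/adj_simple.
split; first by apply: tr_regular => v; rewrite /deg (deg_eq (w0 s e) v).
apply: tr_sat; split; first exact: adj_noclique.
by move=> x y nxy nadj; apply: adj_sat.
Qed.

Lemma cardV s e : #|V s e| = expn s.+1 (kk s e).
Proof. by rewrite card_ffun !card_ord. Qed.

Lemma ratio_bound s e : (0 < s)%N ->
  (INR (deg s e) * INR e.+1 <= 4 * INR #|V s e|)%R.
Proof.
move=> s0; have := density e s0.
move/leP/le_INR; rewrite !mult_INR => h.
have h4 : INR 4 = 4%R by simpl; lra.
by rewrite h4 in h.
Qed.

Lemma Vpos s e : (0 < INR #|V s e|)%R.
Proof. apply: lt_0_INR; apply/leP; rewrite cardV expn_gt0. by []. Qed.

Lemma INR_expn a b : INR (expn a b) = (INR a ^ b)%R.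
Proof. elim: b => [|b IH]; first by rewrite expn0. by rewrite expnS mult_INR IH. Qed.

Lemma Bge3 s : (0 < s)%N -> (3 <= 'C(s.+2, 2))%N.
Proof. move=> s0; have := binB s; nia. Qed.

Lemma part1 : forall (eps : R) (s : nat), (0 < eps)%R -> (1 <= s)%N ->
     exists (n d : nat) (e : rel 'I_n),
       (s + 2 <= n)%N /\ simple_graph e /\ regular e d /\
       Kr_saturated e (s + 2) /\ (INR d / INR n < eps)%R.
Proof.
move=> eps s eps0 s1.
have [N [hN N0]] := archimed_cor1 (eps / 4) ltac:(lra).
exists #|V s N|, (deg s N), (tr (@adj s N)).
split.
  rewrite cardV.
  have hk : (2 <= kk s N)%N by rewrite /kk; have := Bge3 s1; move/leP: N0 => N0; nia.
  apply: leq_trans (leq_pexp2l _ hk) => //.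
  rewrite expnS expn1; nia.
split; first exact: (proj1 (graph_props s N)).
split; first exact: (proj1 (proj2 (graph_props s N))).
split; first exact: (proj2 (proj2 (graph_props s N))).
have hr := ratio_bound N s1.
have hn := Vpos s N.
have hN0 : (0 < INR N)%R by apply: lt_0_INR.
have hNE : (INR N <= INR N.+1)%R by apply: le_INR; lia.
have h4 : (4 < eps * INR N)%R.
  have := Rmult_lt_compat_r (INR N) _ _ hN0 hN.
  rewrite Rinv_l; last by lra.
  lra.
set D := INR (deg s N) in hr *; set Nn := INR #|V s N| in hr hn *; set E := INR N.+1 in hr hNE *.
have hD : (D < eps * Nn)%R.
  have hE : (0 < E)%R by lra.
  have a := Rmult_lt_compat_l Nn _ _ hn h4.
  have b : (eps * Nn * INR N <= eps * Nn * E)%R.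
    apply: Rmult_le_compat_l => //; apply: Rlt_le; apply: Rmult_lt_0_compat => //.
  have : (D * E < eps * Nn * E)%R by lra.
  by move=> h; apply: (Rmult_lt_reg_r E) => //.
apply: (Rmult_lt_reg_r Nn) => //.
rewrite /Rdiv Rmult_assoc Rinv_l; lra.
Qed.

Lemma part2 : forall s : nat, (1 <= s)%N ->
     exists (nn dd : nat -> nat) (F : forall m, rel 'I_(nn m)),
       (forall m, (nn m < nn m.+1)%N) /\
       (forall m, simple_graph (F m) /\ regular (F m) (dd m) /\
                  Kr_saturated (F m) (s + 2)) /\
       exists (C : R) (M : nat), forall m, (M <= m)%N ->
         (INR (dd m) / INR (nn m) <=
            C * (ln (ln (INR (nn m))) ^ 2 / ln (INR (nn m))))%R.
Proof.
move=> s s1.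
exists (fun m => #|V s m.+1|), (fun m => deg s m.+1), (fun m => tr (@adj s m.+1)).
split.
  move=> m; rewrite !cardV ltn_exp2l // /kk.
  have := Bge3 s1; nia.
split; first by move=> m; exact: graph_props.
set B := 'C(s.+2, 2).
have hB := Bge3 s1.
exists (4 * INR B.+1 * ln (INR s.+1))%R, 1%N => m m1.
have hr := ratio_bound m.+1 s1.
have hn := Vpos s m.+1.
set D := INR (deg s m.+1) in hr *; set Nn := INR #|V s m.+1| in hr hn *.
set E := INR m.+2 in hr *.
set k := kk s m.+1.
have hq : (1 < INR s.+1)%R.
  have := lt_INR 1 s.+1; rewrite /=; move=> h; apply: h; apply/ltP; lia.
have lq0 : (0 < ln (INR s.+1))%R by rewrite -ln_1; apply: ln_increasing; lra.
have lq2 : (/ 2 < ln (INR s.+1))%R.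
  apply: Rlt_le_trans ln_lt_2 _.
  have h2 : (2 <= INR s.+1)%R.
    have := le_INR 2 s.+1; rewrite /=; move=> h; have := h ltac:(apply/leP; lia); lra.
  case: (Rle_lt_or_eq_dec _ _ h2) => h; last by rewrite h; lra.
  by apply: Rlt_le; apply: ln_increasing; lra.
have hL : ln Nn = (INR k * ln (INR s.+1))%R.
  rewrite /Nn cardV INR_expn ln_pow; [by [] | lra].
have hk7 : (7 <= INR k)%R.
  have := le_INR 7 k; rewrite /=; move=> h; have := h ltac:(apply/leP; rewrite /k /kk; nia); lra.
have hkE : (INR k <= INR B.+1 * E)%R.
  rewrite /E -mult_INR; apply: le_INR; apply/leP; rewrite /k /kk -/B; nia.
set L := ln Nn in hL *.
have L3 : (3 < L)%R by rewrite hL; nra.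
have LL1 : (1 <= ln L)%R.
  rewrite -[X in (X <= _)%R](ln_exp 1); apply: Rlt_le; apply: ln_increasing.
    exact: exp_pos.
  have := exp_le_3; lra.
have hE : (0 < E)%R by apply: lt_0_INR; lia.
have hB0 : (0 < INR B.+1)%R by apply: lt_0_INR; lia.
have key : (D * L <= 4 * INR B.+1 * ln (INR s.+1) * ln L ^ 2 * Nn)%R.
  have hD : (0 <= D)%R by apply: pos_INR.
  have a : (D * L <= D * (INR B.+1 * E * ln (INR s.+1)))%R.
    rewrite hL; apply: Rmult_le_compat_l => //; apply: Rmult_le_compat_r; lra.
  have b : (D * (INR B.+1 * E * ln (INR s.+1)) = (D * E) * (INR B.+1 * ln (INR s.+1)))%R by ring.
  have c : ((D * E) * (INR B.+1 * ln (INR s.+1)) <= (4 * Nn) * (INR B.+1 * ln (INR s.+1)))%R.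
    apply: Rmult_le_compat_r => //; apply: Rlt_le; apply: Rmult_lt_0_compat => //.
  have d : (1 <= ln L ^ 2)%R by nra.
  have f : ((4 * Nn) * (INR B.+1 * ln (INR s.+1)) <= (4 * Nn) * (INR B.+1 * ln (INR s.+1)) * ln L ^ 2)%R.
    rewrite -[X in (X <= _)%R]Rmult_1_r; apply: Rmult_le_compat_l => //.
    apply: Rlt_le; repeat apply: Rmult_lt_0_compat => //; lra.
  lra.
have pos : (0 < / Nn * / L)%R by apply: Rmult_lt_0_compat; apply: Rinv_0_lt_compat; lra.
have := Rmult_le_compat_r _ _ _ (Rlt_le _ _ pos) key.
have -> : (D * L * (/ Nn * / L) = D / Nn)%R by field; lra.
have -> : (4 * INR B.+1 * ln (INR s.+1) * ln L ^ 2 * Nn * (/ Nn * / L) =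
   4 * INR B.+1 * ln (INR s.+1) * (ln L ^ 2 / L))%R by field; lra.
by [].
Qed.

Theorem theorem1p3 :
  (forall (eps : R) (s : nat), (0 < eps)%R -> (1 <= s)%N ->
     exists (n d : nat) (e : rel 'I_n),
       (s + 2 <= n)%N /\ simple_graph e /\ regular e d /\
       Kr_saturated e (s + 2) /\ (INR d / INR n < eps)%R)
  /\
  (forall s : nat, (1 <= s)%N ->
     exists (nn dd : nat -> nat) (F : forall m, rel 'I_(nn m)),
       (forall m, (nn m < nn m.+1)%N) /\
       (forall m, simple_graph (F m) /\ regular (F m) (dd m) /\
                  Kr_saturated (F m) (s + 2)) /\
       exists (C : R) (M : nat), forall m, (M <= m)%N ->
         (INR (dd m) / INR (nn m) <=
            C * (ln (ln (INR (nn m))) ^ 2 / ln (INR (nn m))))%R).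
Proof. split; [exact: part1 | exact: part2]. Qed.
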